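(* Let $m=p^{a}q^{b}$ with $a,b$ positive integers and $p,q$ distinct primes, and let $n\ge4$. Then there exists an edge-labeling $\alpha$ of the complete graph $K_n$ by ideals of $\mathbb{Z}/m\mathbb{Z}$ such that $\operatorname{rk}[\mathbb{Z}/m\mathbb{Z}]_{(K_n,\alpha)}=1$.
   Context: An edge-labeling assigns to each edge of a graph a nonzero proper ideal of $\mathbb{Z}/m\mathbb{Z}$. A spline on an edge-labeled graph $(G,\alpha)$ with vertices $v_1,\dots,v_n$ is a vector $(f_{v_1},\dots,f_{v_n})\in(\mathbb{Z}/m\mathbb{Z})^n$ with $f_{v_i}-f_{v_j}\in\alpha(v_iv_j)$ for every edge; the splines form a $\mathbb{Z}$-module $[\mathbb{Z}/m\mathbb{Z}]_{(G,\alpha)}$, whose rank $\operatorname{rk}$ is the smallest size of a generating set. *)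

(* Defs.v *)
From HB Require Import structures.
From mathcomp Require Import all_boot all_order all_algebra.
Set Implicit Arguments. Unset Strict Implicit. Unset Printing Implicit Defensive.
Import GRing.Theory.
Local Open Scope ring_scope.

(* Ideals of Z/mZ, represented by 'Z_m (only used with m > 1). *)
Definition is_ideal (m : nat) (I : {set 'Z_m}) : Prop :=
  [/\ 0 \in I,
      forall x y, x \in I -> y \in I -> x + y \in I
    & forall r x, x \in I -> r * x \in I].

Definition edge_labeling (n m : nat) (alpha : 'I_n -> 'I_n -> {set 'Z_m}) : Prop :=
  (forall i j, alpha i j = alpha j i) /\
  (forall i j, i != j ->
     [/\ is_ideal (alpha i j), alpha i j != [set 0] & alpha i j != [set: 'Z_m]]).

Definition is_spline (n m : nat) (alpha : 'I_n -> 'I_n -> {set 'Z_m})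
  (f : 'rV['Z_m]_n) : bool :=
  [forall i, forall j, (i != j) ==> (f 0 i - f 0 j \in alpha i j)].

Definition generates_splines (n m : nat) (alpha : 'I_n -> 'I_n -> {set 'Z_m})
  (G : {set 'rV['Z_m]_n}) : Prop :=
  (forall g, g \in G -> is_spline alpha g) /\
  (forall f, is_spline alpha f ->
     exists c : 'rV['Z_m]_n -> int, f = \sum_(g in G) g *~ c g).

Definition spline_rank_is (n m : nat) (alpha : 'I_n -> 'I_n -> {set 'Z_m})
  (k : nat) : Prop :=
  (exists G, generates_splines alpha G /\ #|G| = k) /\
  (forall G, generates_splines alpha G -> (k <= #|G|)%N).

(* Main.v *)
Require Import Defs.
From mathcomp Require Import all_boot all_order all_algebra.
Set Implicit Arguments. Unset Strict Implicit. Unset Printing Implicit Defensive.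
Import GRing.Theory.
Local Open Scope ring_scope.

Section Id.
Variable M d : nat.
Hypothesis M1 : (1 < M)%N.
Hypothesis dM : (d %| M)%N.

Lemma dvd_mod k : (d %| k %% M)%N = (d %| k)%N.
Proof. by rewrite /dvdn (modn_dvdm _ dM). Qed.

Definition Iset : {set 'Z_M} := [set x : 'Z_M | (d %| val x)%N].

Lemma valD (x y : 'Z_M) : val (x + y) = ((val x + val y) %% M)%N.
Proof. by rewrite /=; congr (_ %% _)%N; exact: Zp_cast. Qed.
Lemma valM (x y : 'Z_M) : val (x * y) = ((val x * val y) %% M)%N.
Proof. by rewrite /=; congr (_ %% _)%N; exact: Zp_cast. Qed.

Lemma Iset_ideal : is_ideal Iset.
Proof.
split.
- by rewrite inE /= dvdn0.
- move=> x y; rewrite !inE valD => hx hy.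
  by rewrite dvd_mod dvdn_add.
- move=> r x; rewrite !inE valM => hx.
  by rewrite dvd_mod dvdn_mull.
Qed.

Lemma Iset_sub x y : x \in Iset -> y \in Iset -> x - y \in Iset.
Proof.
case: Iset_ideal => _ hD hM hx hy.
by rewrite -mulN1r; apply: hD => //; apply: hM.
Qed.

Lemma Iset_nz : (1 < d)%N -> (d < M)%N -> Iset != [set 0].
Proof.
move=> d1 dM'.
have hv : nat_of_ord (d%:R : 'Z_M) = d by rewrite val_Zp_nat // modn_small.
apply/eqP => /setP /(_ (d%:R)).
rewrite !inE /= hv dvdnn => /esym/eqP/(congr1 (@nat_of_ord _)).
by rewrite hv => d0; rewrite d0 in d1.
Qed.

Lemma Iset_proper : (1 < d)%N -> Iset != [set: 'Z_M].
Proof.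
move=> d1; apply/eqP => /setP /(_ 1).
rewrite !inE.
have -> : val (1 : 'Z_M) = 1%N by rewrite /= modn_small // Zp_cast.
by rewrite dvdn1; case: d d1 => [|[|]].
Qed.
End Id.

Lemma Iset_PQ M d1 d2 (M1 : (1 < M)%N) (hM : M = (d1 * d2)%N) (cop : coprime d1 d2)
  (x : 'Z_M) : x \in Iset M d1 -> x \in Iset M d2 -> x = 0.
Proof.
rewrite !inE => h1 h2.
have : (d1 * d2 %| x)%N by rewrite Gauss_dvd // h1 h2.
rewrite -hM => hd; apply: val_inj => /=.
have xlt : (x < M)%N by rewrite -[in X in (_ < X)%N](Zp_cast M1) ltn_ord.
by move: hd; rewrite /dvdn modn_small // => /eqP.
Qed.

Definition Pe n (i j : 'I_n) : bool :=
  [|| (val i == 0%N) && (2 <= val j)%N, (val j == 0%N) && (2 <= val i)%N,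
  (val i == 1%N) && (val j == 2%N) | (val i == 2%N) && (val j == 1%N)].

Lemma PeC n (i j : 'I_n) : Pe i j = Pe j i.
Proof.
rewrite /Pe; move: (val i) (val j) => x y.
by case: x => [|[|[|x]]]; case: y => [|[|[|y]]].
Qed.

From mathcomp Require Import zify.

Theorem mainTheorem11 (p q a b n : nat) :
  prime p -> prime q -> p != q -> (0 < a)%N -> (0 < b)%N -> (4 <= n)%N ->
  exists alpha : 'I_n -> 'I_n -> {set 'Z_(p ^ a * q ^ b)},
    edge_labeling alpha /\ spline_rank_is alpha 1.
Proof.
move=> pp qp pq a0 b0; case: n => [//|n] n4.
set M := (p ^ a * q ^ b)%N.
have p1 : (1 < p ^ a)%N by rewrite -(expn0 p) ltn_exp2l ?prime_gt1.
have q1 : (1 < q ^ b)%N by rewrite -(expn0 q) ltn_exp2l ?prime_gt1.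
have pM : (p ^ a < M)%N by rewrite /M -[X in (X < _)%N]muln1 ltn_mul2l; lia.
have qM : (q ^ b < M)%N by rewrite /M -[X in (X < _)%N]mul1n ltn_mul2r; lia.
have M1 : (1 < M)%N by lia.
have pdM : (p ^ a %| M)%N by rewrite /M dvdn_mulr.
have qdM : (q ^ b %| M)%N by rewrite /M dvdn_mull.
have cop : coprime (p ^ a) (q ^ b).
  by rewrite coprime_pexpl // coprime_pexpr // prime_coprime // dvdn_prime2 //.
set P := Iset M (p ^ a). set Q := Iset M (q ^ b).
have PQ0 x : x \in P -> x \in Q -> x = 0 by apply: Iset_PQ.
have PI := Iset_ideal M1 pdM. have QI := Iset_ideal M1 qdM.
have PD x y : x \in P -> y \in P -> x + y \in P by case: PI => _ H _; apply: H.
have QD x y : x \in Q -> y \in Q -> x + y \in Q by case: QI => _ H _; apply: H.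
pose alpha (i j : 'I_n.+1) := if Pe i j then P else Q.
exists alpha; split.
  split; first by move=> i j; rewrite /alpha PeC.
  move=> i j _; rewrite /alpha; case: (Pe i j); split.
  - exact: PI.
  - exact: Iset_nz.
  - exact: Iset_proper.
  - exact: QI.
  - exact: Iset_nz.
  - exact: Iset_proper.
have n0 : (0 < n)%N by lia.
pose v k : 'I_n.+1 := inord k.
have vK k : (k < n.+1)%N -> val (v k) = k by move=> hk; exact: inordK.
have aP (i j : 'I_n.+1) : Pe i j -> alpha i j = P by rewrite /alpha => ->.
have aQ (i j : 'I_n.+1) : ~~ Pe i j -> alpha i j = Q by rewrite /alpha => /negbTE ->.
have key : forall f, is_spline alpha f -> forall i, f 0 i = f 0 (v 0%N).
  move=> f /forallP hf.
  have s (i j : 'I_n.+1) : i != j -> f 0 i - f 0 j \in alpha i j.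
    by move=> hij; move: (hf i) => /forallP /(_ j) /implyP; apply.
  have tr (i j k : 'I_n.+1) : f 0 i - f 0 k = (f 0 i - f 0 j) + (f 0 j - f 0 k).
    by rewrite addrA subrK.
  have ne (i j : 'I_n.+1) : val i != val j -> i != j.
    by move=> h; apply/eqP => e; rewrite e eqxx in h.
  have sP (i j : 'I_n.+1) : val i != val j -> Pe i j -> f 0 i - f 0 j \in P.
    by move=> h1 h2; rewrite -(aP i j h2); apply: s; apply: ne.
  have sQ (i j : 'I_n.+1) : val i != val j -> ~~ Pe i j -> f 0 i - f 0 j \in Q.
    by move=> h1 h2; rewrite -(aQ i j h2); apply: s; apply: ne.
  have ge3 i : (3 <= val i)%N -> f 0 (v 0%N) = f 0 i.
    move=> hi; apply/eqP; rewrite -subr_eq0; apply/eqP; apply: PQ0.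
      by apply: sP; rewrite /Pe ?vK //; lia.
    rewrite (tr _ (v 1%N)); apply: QD.
      by apply: sQ; rewrite /Pe ?vK //; lia.
    by apply: sQ; rewrite /Pe ?vK //; lia.
  have e2 : f 0 (v 0%N) = f 0 (v 2%N).
    apply/eqP; rewrite -subr_eq0; apply/eqP; apply: PQ0.
      by apply: sP; rewrite /Pe ?vK //; lia.
    rewrite (tr _ (v 3%N)); apply: QD; last by apply: sQ; rewrite /Pe ?vK //; lia.
    by rewrite -(ge3 (v 3%N)) ?vK // subrr; case: QI.
  have e1 : f 0 (v 0%N) = f 0 (v 1%N).
    apply/eqP; rewrite -subr_eq0; apply/eqP; apply: PQ0; last first.
      by apply: sQ; rewrite /Pe ?vK //; lia.
    rewrite (tr _ (v 2%N)); apply: PD; last by apply: sP; rewrite /Pe ?vK //; lia.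
    by rewrite -e2 subrr; case: PI.
  move=> i.
  have hi : i = v (val i) by apply: val_inj; rewrite vK ?ltn_ord.
  case: (ltnP (val i) 3) => h3; last by rewrite -(ge3 i h3).
  move: hi; case: (val i) h3 => [|[|[|k]]] // _ -> //.
have one_spline : is_spline alpha (const_mx 1).
  apply/forallP => i; apply/forallP => j; apply/implyP => _.
  rewrite !mxE subrr /alpha; case: (Pe i j).
  - by case: PI.
  - by case: QI.
split.
  exists [set const_mx 1]; split; last by rewrite cards1.
  split; first by move=> g; rewrite inE => /eqP ->.
  move=> f hf; exists (fun _ => (nat_of_ord (f 0 (v 0%N)))%:Z).
  rewrite big_set1 /=.
  apply/matrixP => i j; rewrite (ord1 i).
  have -> : (const_mx 1 *~ (nat_of_ord (f 0 (v 0%N)))%:Z : 'rV['Z_M]_n.+1)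
    = const_mx 1 *+ (nat_of_ord (f 0 (v 0%N))) by [].
  by rewrite mulmxnE mxE natr_Zp; apply: key.
move=> G [_ hG]; rewrite card_gt0; apply/negP => /eqP G0.
have [c] := hG _ one_spline.
rewrite G0 big_set0 => /matrixP /(_ 0 (v 0%N)); rewrite !mxE => /eqP.
by rewrite oner_eq0.
Qed.
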